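(* Let $G=\{1,\dots,d\}^m$ and let $A\subseteq G$ satisfy $\mathsf{DAff}(A)=A$. If $\frac{|A|}{d^m}\ge\frac12$, then $$\dim\mathsf{Aff}(G)-\dim\mathsf{Aff}(A)\le 2d\,\frac{d^m-|A|}{d^m}.$$
   Context: For $z\in G$, $\sigma(z)\in\{0,1\}^{md}$ is the concatenation of the one-hot encodings of $z_1,\dots,z_m$. For $A\subseteq G$, $\mathsf{Aff}(A)\subseteq\mathbb{R}^{md}$ is the affine hull of $\{\sigma(z):z\in A\}$, and $\mathsf{DAff}(A)=\{z\in G:\sigma(z)\in\mathsf{Aff}(A)\}$ is the discrete affine hull. *)

(* Defs.v *)
From HB Require Import structures.
From mathcomp Require Import all_boot all_order all_algebra.
Set Implicit Arguments. Unset Strict Implicit. Unset Printing Implicit Defensive.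
Import Order.TTheory GRing.Theory Num.Theory.
Local Open Scope ring_scope.

(* The grid G = {1,...,d}^m, with {1,...,d} represented by 'I_d = {0,...,d-1}. *)
Definition grid (m d : nat) := {ffun 'I_m -> 'I_d}.

(* sigma(z) in R^{md}: concatenation of the one-hot encodings of z_1..z_m.
   Built as the m x d 0/1 matrix (row i = one-hot of z_i), flattened by mxvec. *)
Definition sigma (R : pzRingType) {m d : nat} (z : grid m d) : 'rV[R]_(m * d) :=
  mxvec (\matrix_(i < m, j < d) ((z i == j)%:R : R)).

Definition in_Aff (R : pzRingType) {m d : nat} (A : {set grid m d})
    (v : 'rV[R]_(m * d)) : Prop :=
  exists lam : grid m d -> R,
    \sum_(z in A) lam z = 1 /\ v = \sum_(z in A) lam z *: @sigma R m d z.

Definition DAff (R : pzRingType) {m d : nat} (A : {set grid m d}) : grid m d -> Prop :=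
  fun z => @in_Aff R m d A (@sigma R m d z).

(* dim Aff(A): dimension of the direction space of Aff(A), i.e. of the linear
   span of the differences sigma z - sigma z' (z, z' in A).  (For A nonempty
   this is the usual affine dimension.) *)
Definition dimAff (R : fieldType) {m d : nat} (A : {set grid m d}) : nat :=
  \rank (\sum_(z in A) \sum_(z' in A) <<@sigma R m d z - @sigma R m d z'>>)%MS.

Arguments sigma R {m d} z.
Arguments in_Aff R {m d} A v.
Arguments DAff R {m d} A z.
Arguments dimAff R {m d} A.

(* Main.v *)
Require Import Defs.
From HB Require Import structures.
From mathcomp Require Import all_boot all_order all_algebra.
From mathcomp Require Import zify ring lra.
Import Order.TTheory GRing.Theory Num.Theory.
Local Open Scope ring_scope.

Lemma bern (d t : nat) : (t <= d)%N -> ((d - t) * d ^ t <= d * (d.-1) ^ t)%N.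
Proof.
elim: t => [|t IH] ht; first by rewrite !expn0 subn0 !muln1.
have := IH (ltnW ht).
rewrite !expnS.
move: (d ^ t)%N (d.-1 ^ t)%N => X Y h.
have h2: ((d - t.+1) * d <= (d - t) * d.-1)%N by nia.
have := leq_mul h2 (leqnn X).
have := leq_mul (leqnn d.-1) h.
nia.
Qed.

Section Main.
Variables (R : fieldType) (m d : nat).
Local Notation G := (grid m d).

Definition DA (A : {set G}) : 'M[R]_(m * d) :=
  (\sum_(z in A) \sum_(z' in A) <<sigma R z - sigma R z'>>)%MS.

Lemma DA_gen (A : {set G}) (z z' : G) : z \in A -> z' \in A -> (sigma R z - sigma R z' <= DA A)%MS.
Proof.
move=> hz hz'; apply: (sumsmx_sup z) => //; apply: (sumsmx_sup z') => //.
by rewrite genmxE.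
Qed.

Lemma DA_subP (A : {set G}) p (X : 'M[R]_(p, m * d)) :
  (forall z z', z \in A -> z' \in A -> (sigma R z - sigma R z' <= X)%MS) ->
  (DA A <= X)%MS.
Proof.
move=> h; apply/sumsmx_subP => z hz; apply/sumsmx_subP => z' hz'.
by rewrite genmxE; apply: h.
Qed.

Lemma DA_sub {A B : {set G}} : A \subset B -> (DA A <= DA B)%MS.
Proof.
move=> sAB; apply: DA_subP => z z' hz hz'.
by apply: DA_gen; apply: (subsetP sAB).
Qed.

Lemma sigmaE (z : G) (i : 'I_m) (j : 'I_d) : sigma R z 0 (mxvec_index i j) = (z i == j)%:R.
Proof. by rewrite /sigma mxvecE mxE. Qed.

Lemma slice_step (A : {set G}) (i : 'I_m) (b : 'I_d) (y x : G) :
  y \in A -> y i = b -> x \in A -> x i != b ->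
  (\rank (DA [set z in A | z i != b]) < \rank (DA A))%N.
Proof.
move=> hy hyb hx hxb.
set A' := [set z in A | z i != b].
have sub : A' \subset A by apply/subsetP => z; rewrite inE => /andP[].
set c := delta_mx (mxvec_index i b) (0 : 'I_1) : 'M[R]_(m * d, 1).
have hker : (DA A' <= kermx c)%MS.
  apply: DA_subP => z z'; rewrite !inE => /andP[_ hz] /andP[_ hz'].
  rewrite sub_kermx mulmxBl -!colE; apply/eqP/matrixP => p q.
  by rewrite [p]ord1 [q]ord1 !mxE !sigmaE (negbTE hz) (negbTE hz') subrr.
have hv : (sigma R y - sigma R x <= DA A)%MS by apply: DA_gen.
have nv : ~~ (sigma R y - sigma R x <= DA A')%MS.
  apply/negP => h; have := submx_trans h hker.
  rewrite sub_kermx mulmxBl -!colE => /eqP/matrixP/(_ 0 0).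
  rewrite !mxE !sigmaE hyb eqxx (negbTE hxb) subr0 => /eqP.
  by rewrite oner_eq0.
have [le eq] := mxrank_leqif_sup (DA_sub sub).
rewrite ltn_neqAle le andbT eq; apply/negP => h; move/negP: nv; apply.
exact: submx_trans hv h.
Qed.


Lemma slices (A : {set G}) (i : 'I_m) (a : 'I_d) :
  [set z in A | z i == a] != set0 ->
  (\rank (DA [set z in A | z i == a]) + #|[set z i | z : G in A]|
     <= (\rank (DA A)).+1)%N.
Proof.
move: (leqnn #|A|); move: {2}#|A| => n.
elim: n A => [|n IH] A hA ne.
  case/set0Pn: ne => z; rewrite inE => /andP[hz _].
  by move: hA; rewrite leqn0 cards_eq0 => /eqP Ae; rewrite Ae inE in hz.
case/set0Pn: (ne) => x; rewrite inE => /andP[hx /eqP hxa].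
case: (boolP ([set z i | z : G in A] \subset [set a])) => hS.
  have -> : [set z in A | z i == a] = A.
    apply/setP => z; rewrite inE; case hz: (z \in A) => //=.
    have := subsetP hS (z i) (imset_f _ hz); by rewrite inE.
  have := subset_leq_card hS; rewrite cards1.
  by move=> h; rewrite -addn1 leq_add2l.
case/subsetPn: hS => b /imsetP [y hy ->]; rewrite inE => hya.
set A' := [set z in A | z i != y i].
have step : (\rank (DA A') < \rank (DA A))%N.
  apply: (@slice_step A i (y i) y x hy erefl hx); by rewrite hxa eq_sym.
have hA' : (#|A'| <= n)%N.
  have : A' \proper A.
    rewrite properE; apply/andP; split.
      by apply/subsetP => z; rewrite inE => /andP[].
    by apply/subsetP => /(_ y hy); rewrite inE eqxx andbF.
  by move/proper_card => h; rewrite -ltnS; apply: leq_trans h hA.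
have eqsl : [set z in A' | z i == a] = [set z in A | z i == a].
  apply/setP => z; rewrite !inE; case: (z i =P a) => [->|]; last by rewrite !andbF.
  by rewrite eq_sym hya !andbT.
have neA' : [set z in A' | z i == a] != set0 by rewrite eqsl.
have := IH A' hA' neA'; rewrite eqsl => ih.
have hcard : (#|[set z i | z : G in A]| <= #|[set z i | z : G in A']|.+1)%N.
  have : [set z i | z : G in A] \subset y i |: [set z i | z : G in A'].
    apply/subsetP => c /imsetP [z hz ->]; rewrite !inE.
    case: (z i =P y i) => [->|/eqP ne']; first by [].
    by apply/orP; right; apply: imset_f; rewrite inE hz ne'.
  move/subset_leq_card; rewrite cardsU1; case: (_ \notin _) => //= h.
  by apply: leq_trans h _.
lia.
Qed.


Lemma big_slice (A : {set G}) (i : 'I_m) (x : G) : x \in A ->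
  exists a, a \in [set z i | z : G in A] /\
    (#|A| <= #|[set z i | z : G in A]| * #|[set z in A | z i == a]|)%N.
Proof.
move=> hx.
have xS : x i \in [set z i | z : G in A] by apply: imset_f.
case: (arg_maxnP (fun b => #|[set z in A | z i == b]|) xS) => a aS amax.
exists a; split => //.
rewrite -[#|A|]sum1_card (partition_big (fun z : G => z i) predT) //=.
rewrite -sum_nat_const [X in (_ <= X)%N]big_mkcond /=.
apply: leq_sum => b _.
have -> : (\sum_(z in A | z i == b) 1 = #|[set z in A | z i == b]|)%N.
  by rewrite -sum1_card; apply: eq_bigl => z; rewrite inE.
case: ifP => bS; first exact: amax.
case: (set_0Vmem [set z in A | z i == b]) => [->|[z]]; first by rewrite cards0.
by rewrite inE => /andP[hz /eqP e]; move/negbT: bS; rewrite -e; case/negP; apply: imset_f.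
Qed.

Definition cb (A : {set G}) j := forall z z', z \in A -> z' \in A ->
  forall i : 'I_m, (j <= i)%N -> z i = z' i.

Lemma mainC j : (j <= m)%N -> forall A : {set G}, A != set0 -> cb A j ->
  (#|A| <= d ^ j)%N /\ forall k, (k + \rank (DA A) <= j * d.-1)%N ->
     (#|A| * d ^ k <= d ^ j * d.-1 ^ k)%N.
Proof.
elim: j => [|j IH] hj A ne hcb.
  case/set0Pn: ne => x hx.
  have h1 : (#|A| <= 1)%N.
    rewrite -(cards1 x); apply: subset_leq_card; apply/subsetP => z hz.
    by rewrite inE; apply/eqP/ffunP => i; apply: hcb.
  split; first by rewrite expn0.
  by move=> k; rewrite mul0n leqn0 addn_eq0 => /andP[/eqP -> _]; rewrite !expn0 !muln1.
have ltj : (j < m)%N := hj.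
pose i := Ordinal ltj.
case/set0Pn: (ne) => x hx.
have [a [aS hcard]] := @big_slice A i x hx.
set Sl := [set z in A | z i == a].
have neS : Sl != set0.
  by case/imsetP: aS => z hz ea; apply/set0Pn; exists z; rewrite /Sl inE hz ea eqxx.
have cbS : cb Sl j.
  move=> z z'; rewrite !inE => /andP[hz /eqP ez] /andP[hz' /eqP ez'] i'.
  rewrite leq_eqVlt => /orP[/eqP e|lt]; last exact: hcb.
  have -> : i' = i by apply: val_inj; rewrite /= e.
  by rewrite ez ez'.
have [h1 h2] := IH (ltnW hj) Sl neS cbS.
have hsl := @slices A i a neS; rewrite -/Sl in hsl hcard.
set s := #|[set z i | z : G in A]| in hcard hsl.
have s1 : (0 < s)%N by rewrite card_gt0; apply/set0Pn; exists a.
have sd : (s <= d)%N by rewrite -[d in (_ <= d)%N]card_ord; apply: max_card.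
split.
  by rewrite expnS; apply: leq_trans hcard _; apply: leq_mul.
move=> k hk.
rewrite mulSn in hk.
case: (leqP (d - s) k) => hks.
  pose k' := (k - (d - s))%N.
  have hk' : (k' + \rank (DA Sl) <= j * d.-1)%N by rewrite /k'; lia.
  have hI := h2 k' hk'.
  have hb := @bern d (d - s) (leq_subr s d); rewrite subKn in hb => //.
  have ek : k = (k' + (d - s))%N by rewrite /k'; lia.
  rewrite ek !expnD expnS.
  apply: (leq_trans (leq_mul hcard (leqnn _))).
  move: hI hb; move: (d ^ k')%N (d ^ (d - s))%N (d ^ j)%N (d.-1 ^ k')%N (d.-1 ^ (d - s))%N #|Sl| => X1 X2 X3 X4 X5 X6 hI hb.
  have := leq_mul hI hb.
  nia.
have hb := @bern d k (ltnW (leq_trans hks (leq_subr s d))).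
have sk : (s <= d - k)%N by lia.
apply: (leq_trans (leq_mul hcard (leqnn _))).
rewrite expnS.
move: hb h1; move: (d ^ k)%N (d ^ j)%N (d.-1 ^ k)%N #|Sl| => X1 X2 X3 X4 hb h1.
have := leq_mul (leq_mul sk h1) (leqnn X1).
have := leq_mul (leqnn X2) hb.
nia.
Qed.


Definition Smx : 'M[R]_(m * d, m) :=
  \matrix_(p, i') \sum_(j < d) (vec_mx ('e_p : 'rV[R]_(m * d)) : 'M_(m, d)) i' j.

Lemma Smx_row (i : 'I_m) (a : 'I_d) : row (mxvec_index i a) Smx = 'e_i.
Proof.
apply/rowP => i'; rewrite !mxE vec_mx_delta.
rewrite (bigD1 a) //= big1 => [|j /negbTE ja]; last by rewrite mxE ja andbF.
by rewrite !mxE eqxx andbT addr0.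
Qed.

Lemma sigma_sum (z : G) : sigma R z = \sum_i 'e_(mxvec_index i (z i)).
Proof.
rewrite /sigma.
have -> : \matrix_(i, j) ((z i == j)%:R) = \sum_i delta_mx i (z i) :> 'M[R]_(m, d).
  apply/matrixP => i j; rewrite !mxE summxE (bigD1 i) //= big1 => [|i' ne].
    by rewrite mxE eqxx /= addr0 eq_sym.
  by rewrite mxE eq_sym (negbTE ne).
rewrite linear_sum; apply: eq_bigr => i _; exact: mxvec_delta.
Qed.

Lemma sigmaS (z : G) : sigma R z *m Smx = \sum_(i < m) 'e_i.
Proof.
by rewrite sigma_sum mulmx_suml; apply: eq_bigr => i _; rewrite -rowE Smx_row.
Qed.

Lemma rankG : (\rank (DA setT) <= m * d.-1)%N.
Proof.
case: (posnP d) => [d0|dpos].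
  by apply: leq_trans (rank_leq_col _) _; rewrite d0 muln0.
pose a0 := Ordinal dpos.
have hk : (DA setT <= kermx Smx)%MS.
  by apply: DA_subP => z z' _ _; rewrite sub_kermx mulmxBl !sigmaS subrr.
have := mxrankS hk; rewrite mxrank_ker.
have hS : (m <= \rank Smx)%N.
  pose T : 'M[R]_(m, m * d) := \matrix_(i < m) ('e_(mxvec_index i a0) : 'rV_(m * d)).
  have e : T *m Smx = 1%:M.
    by apply/row_matrixP => i; rewrite row_mul rowK -rowE Smx_row row1.
  by have := mxrankM_maxr T Smx; rewrite e mxrank1.
move=> h; apply: leq_trans h _.
nia.
Qed.

End Main.

Lemma bern2 (e k : nat) : (e ^ k * (e + k.+1) <= e.+1 ^ k.+1)%N.
Proof.
elim: k => [|k IH]; first by rewrite expn0 mul1n addn1 expn1.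
rewrite expnS [(e.+1 ^ k.+2)%N]expnS.
move: (e ^ k)%N (e.+1 ^ k.+1)%N IH => X Y IH.
have := leq_mul (leqnn e.+1) IH.
nia.
Qed.

Theorem lemma3 (R : realFieldType) (m d : nat) (A : {set grid m d}) :
  (forall z : grid m d, DAff R A z <-> z \in A) ->
  #|A|%:R / (d ^ m)%:R >= 1 / 2 :> R ->
  (dimAff R [set: grid m d])%:R - (dimAff R A)%:R
    <= 2 * d%:R * (((d ^ m)%:R - #|A|%:R) / (d ^ m)%:R) :> R.
Proof.
move=> _ h.
have Dpos : (0 < d ^ m)%N.
  rewrite lt0n; apply/negP => /eqP D0; move: h; rewrite D0 invr0 mulr0.
  lra.
have h2 : (d ^ m <= 2 * #|A|)%N.
  rewrite ler_pdivlMr ?ltr0n // in h.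
  have : ((d ^ m)%:R <= (2 * #|A|)%:R :> R) by rewrite natrM; lra.
  by rewrite ler_nat.
have Nne : A != set0.
  by rewrite -card_gt0 lt0n; apply/negP => /eqP N0; move: h2; rewrite N0; lia.
have cbA : @cb m d A m by move=> z z' _ _ i hi; have := ltn_ord i; lia.
have [h1 hC] := @mainC R m d m (leqnn m) A Nne cbA.
have sub : (\rank (DA R m d A) <= \rank (DA R m d setT))%N by apply: mxrankS; apply: DA_sub; apply: subsetT.
have hG := rankG R m d.
have hk := hC (\rank (DA R m d setT) - \rank (DA R m d A))%N ltac:(lia).
rewrite /dimAff -/(DA R m d A) -/(DA R m d setT).
move: hk sub hG; set rG := \rank (DA R m d setT); set rA := \rank (DA R m d A).
move=> hk sub hG.
have key : ((rG - rA) * d ^ m <= 2 * d * (d ^ m - #|A|))%N.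
  have hkle : (rG - rA <= m * d.-1)%N by lia.
  move: hk hkle h1 h2 Dpos; move: (rG - rA)%N => k.
  clear hG; move: (d ^ m)%N #|A| => D N hk hG h1 h2 Dpos.
  case: k hk hG => [|k] hk hG; first by rewrite mul0n.
  have e1 : (1 <= d.-1)%N by move: hG; case: (d.-1) => //; rewrite muln0 ltn0.
  have ed : d = (d.-1).+1 by lia.
  move: hk; rewrite {1}ed; move: (d.-1) e1 ed => e e1 ed hk.
  have hb := bern2 e k.
  have Xpos : (0 < e ^ k)%N by rewrite expn_gt0 e1.
  have hm : (N * (e + k.+1) * e ^ k <= D * e * e ^ k)%N.
    rewrite -[X in (_ <= X)%N]mulnA -expnS; apply: leq_trans _ hk.
    by rewrite -mulnA leq_mul2l mulnC hb orbT.
  rewrite leq_pmul2r // in hm.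
  have := leq_mul (leqnn k.+1) h2.
  rewrite ed; nia.
rewrite -(natrB _ sub) -(natrB _ h1) mulrA ler_pdivlMr ?ltr0n //.
have -> : (2 : R) = 2%:R by [].
by rewrite -!natrM ler_nat.
Qed.
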